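(* Let $(A,\mu,\alpha)$ be a Hom-associative algebra and $r=\sum_i x_i\otimes y_i\in A\otimes A$ with $(\alpha\otimes\alpha)(r)=r$ and $r$ a solution of the associative Hom-Yang-Baxter equation. Define $R:A\to A$ by $R(a)=\sum_i\alpha(x_i)(ay_i)$ (which equals $\sum_i(x_ia)\alpha(y_i)$). Then $R$ is an $\alpha^2$-Rota-Baxter operator, i.e. $R$ commutes with $\alpha$ and $R(\alpha^2(a))R(\alpha^2(b))=R\big(\alpha^2(a)R(b)+R(a)\alpha^2(b)\big)$ for all $a,b\in A$.
   Context: A Hom-associative algebra $(A,\mu,\alpha)$: linear space, bilinear $\mu(x\otimes y)=xy$, linear $\alpha$ with $\alpha(xy)=\alpha(x)\alpha(y)$ and $\alpha(x)(yz)=(xy)\alpha(z)$. For $r=\sum_ix_i\otimes y_i$ with $(\alpha\otimes\alpha)(r)=r$, $r$ solves the associative Hom-Yang-Baxter equation if $\sum_{i,j}\alpha(x_i)\otimes y_ix_j\otimes\alpha(y_j)=\sum_{i,j}x_ix_j\otimes\alpha(y_j)\otimes\alpha(y_i)+\sum_{i,j}\alpha(x_i)\otimes\alpha(x_j)\otimes y_jy_i$. *)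

(* Defs.v *)
From HB Require Import structures.
From mathcomp Require Import all_boot all_order all_algebra.
Set Implicit Arguments. Unset Strict Implicit. Unset Printing Implicit Defensive.
Import GRing.Theory.
Local Open Scope ring_scope.

Definition bilinearP (K : fieldType) (U V W : lmodType K) (f : U -> V -> W) :=
  (forall u, linear (f u)) /\ (forall v, linear (fun u => f u v)).

Definition trilinearP (K : fieldType) (U V W M : lmodType K)
    (f : U -> V -> W -> M) :=
  (forall v w, linear (fun u => f u v w)) /\
  (forall u w, linear (fun v => f u v w)) /\
  (forall u v, linear (f u v)).

Definition hom_assoc (K : fieldType) (A : lmodType K)
    (mu : A -> A -> A) (alpha : A -> A) :=
  [/\ bilinearP mu, linear alpha,
      (forall x y, alpha (mu x y) = mu (alpha x) (alpha y)) &
      (forall x y z, mu (alpha x) (mu y z) = mu (mu x y) (alpha z))].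

(* An element sum_i x_i (x) y_i of A (x) A is represented by the list of
   pairs (x_i, y_i); equality in A (x) A is expressed via the universal
   property of the tensor product: two sums of pure tensors are equal iff
   every bilinear map into every K-module agrees on them. *)
Definition tens2_eq (K : fieldType) (A : lmodType K) (s t : seq (A * A)) :=
  forall (M : lmodType K) (f : A -> A -> M), bilinearP f ->
    \sum_(p <- s) f p.1 p.2 = \sum_(p <- t) f p.1 p.2.

Definition tens3_eq (K : fieldType) (A : lmodType K) (s t : seq (A * A * A)) :=
  forall (M : lmodType K) (f : A -> A -> A -> M), trilinearP f ->
    \sum_(p <- s) f p.1.1 p.1.2 p.2 = \sum_(p <- t) f p.1.1 p.1.2 p.2.

Definition alpha_inv (K : fieldType) (A : lmodType K) (alpha : A -> A)
    (r : seq (A * A)) :=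
  tens2_eq [seq (alpha p.1, alpha p.2) | p <- r] r.

Definition AHYBE (K : fieldType) (A : lmodType K) (mu : A -> A -> A)
    (alpha : A -> A) (r : seq (A * A)) :=
  tens3_eq [seq (alpha p.1, mu p.2 q.1, alpha q.2) | p <- r, q <- r]
    ([seq (mu p.1 q.1, alpha q.2, alpha p.2) | p <- r, q <- r] ++
     [seq (alpha p.1, alpha q.1, mu q.2 p.2) | p <- r, q <- r]).

Definition Rop (K : fieldType) (A : lmodType K) (mu : A -> A -> A)
    (alpha : A -> A) (r : seq (A * A)) (a : A) : A :=
  \sum_(p <- r) mu (alpha p.1) (mu a p.2).

(* Main.v *)
Require Import Defs.
From HB Require Import structures.
From mathcomp Require Import all_boot all_order all_algebra.
Import GRing.Theory.
Local Open Scope ring_scope.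

Definition ff {T : Type} (m : T -> T -> T) (al : T -> T) (a b : T) u v w :=
  m (m (m (al u) (al (al a))) (al (al v))) (m (al (al (al b))) (al (al w))).

Lemma pw1 (T : Type) (m : T -> T -> T) (al : T -> T)
  (HM : forall x y, al (m x y) = m (al x) (al y))
  (HA : forall x y z, m (al x) (m y z) = m (m x y) (al z)) a b x y x' y' :
  m (m (al (al (al x))) (m (al (al a)) (al (al y))))
    (m (al (al (al x'))) (m (al (al b)) (al (al y'))))
  = ff m al a b (al x) (m y x') (al y').
Proof.
rewrite /ff.
rewrite (HA (al (al x)) (al (al a)) (al (al y))).
set P := m (al (al x)) (al (al a)).
have e : al (m (al (al x')) (m (al b) (al y'))) = m (al (al (al x'))) (m (al (al b)) (al (al y'))) by rewrite !HM.
rewrite -e -(HA P (al (al (al y)))).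
rewrite (HA (al (al y)) (al (al x'))) (HA P).
by rewrite !HM.
Qed.

Lemma pw2 (T : Type) (m : T -> T -> T) (al : T -> T)
  (HM : forall x y, al (m x y) = m (al x) (al y))
  (HA : forall x y z, m (al x) (m y z) = m (m x y) (al z)) a b x y x' y' :
  m (al (al (al (al x)))) (m (m (m (al x') (m a y')) (al (al b))) (al (al (al y))))
  = ff m al a b (m x x') (al y') (al y).
Proof.
rewrite /ff.
rewrite (HA (al (al (al x)))) (HA (al (al x))).
rewrite -(HA (m (al (al x)) (m (al x') (m a y')))).
congr (m _ _).
rewrite !HM -(HA (m (al x) (al x')) (al (al a)) (al (al y'))) !HM (HA (al (al x))) !HM.
done.
Qed.

Lemma pw3 (T : Type) (m : T -> T -> T) (al : T -> T)
  (HM : forall x y, al (m x y) = m (al x) (al y))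
  (HA : forall x y z, m (al x) (m y z) = m (m x y) (al z)) a b x y x' y' :
  m (al (al (al (al x)))) (m (m (al (al a)) (m (al x') (m b y'))) (al (al (al y))))
  = ff m al a b (al x) (al x') (m y' y).
Proof.
rewrite /ff.
rewrite (HA (al (al (al x)))) (HA (al (al x))).
set P := m (al (al x)) (al (al a)).
rewrite -(HA P (al (m (al x') (m b y'))) (al (al (al y)))).
have e : m (m P (al (al (al x')))) (m (al (al (al b))) (al (al (m y' y))))
   = m (al P) (m (al (al (al x'))) (m (al (al b)) (al (m y' y)))).
  by rewrite (HA P) !HM.
rewrite e; congr (m _ _).
rewrite !HM (HA (al (al x'))) (HA (al x') (al b) (al y')).
by rewrite -(HA (m (al x') (al b)) (al (al y')) (al (al y))) !HM.
Qed.

Lemma lin_comp (K : fieldType) (A : lmodType K) (g h : A -> A) :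
  linear g -> linear h -> linear (fun u => g (h u)).
Proof. by move=> hg hh c u v; rewrite hh hg. Qed.

Lemma lin0 (K : fieldType) (A : lmodType K) (f : A -> A) : linear f -> f 0 = 0.
Proof.
move=> h; have e := h 1 0 0; rewrite !scale1r addr0 in e.
have e2 := congr1 (fun z => z - f 0) e; simpl in e2.
by rewrite addrK subrr in e2; rewrite -e2.
Qed.

Lemma linD (K : fieldType) (A : lmodType K) (f : A -> A) u v :
  linear f -> f (u + v) = f u + f v.
Proof. by move=> h; have := h 1 u v; rewrite !scale1r. Qed.

Lemma lin_sum (K : fieldType) (A : lmodType K) (f : A -> A) (I : Type)
  (s : seq I) (F : I -> A) :
  linear f -> f (\sum_(p <- s) F p) = \sum_(p <- s) f (F p).
Proof.
move=> h; elim: s => [|x s IH]; first by rewrite !big_nil lin0.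
by rewrite !big_cons linD // IH.
Qed.

Lemma iter_lin (K : fieldType) (A : lmodType K) (al : A -> A) k :
  linear al -> linear (iter k al).
Proof.
move=> h; elim: k => [|k IH] c u v //=.
by rewrite IH h.
Qed.

Lemma invk (K : fieldType) (A : lmodType K) (alpha : A -> A) (r : seq (A * A)) :
  linear alpha -> alpha_inv alpha r -> forall k (F : A -> A -> A),
  (forall v, linear (fun u => F u v)) -> (forall u, linear (F u)) ->
  \sum_(p <- r) F (iter k alpha p.1) (iter k alpha p.2) = \sum_(p <- r) F p.1 p.2.
Proof.
move=> aL Hi k; elim: k => [|k IH] F h1 h2; first by [].
under eq_bigr => p _ do rewrite !iterSr.
have := Hi A (fun u v => F (iter k alpha u) (iter k alpha v)).
rewrite big_map /= => ->; first exact: IH.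
split=> [u|v].
- by move=> c x y /=; rewrite (@iter_lin _ _ _ k aL); exact: h2.
- by move=> c x y /=; rewrite (@iter_lin _ _ _ k aL); exact: h1.
Qed.

Lemma inv4 (K : fieldType) (A : lmodType K) (alpha : A -> A) (r : seq (A * A)) :
  linear alpha -> alpha_inv alpha r -> forall k l (G : A -> A -> A -> A -> A),
  (forall y x' y', linear (fun x => G x y x' y')) ->
  (forall x x' y', linear (fun y => G x y x' y')) ->
  (forall x y y', linear (fun x' => G x y x' y')) ->
  (forall x y x', linear (fun y' => G x y x' y')) ->
  \sum_(p <- r) \sum_(q <- r) G (iter k alpha p.1) (iter k alpha p.2)
       (iter l alpha q.1) (iter l alpha q.2)
  = \sum_(p <- r) \sum_(q <- r) G p.1 p.2 q.1 q.2.
Proof.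
move=> aL Hi k l G h1 h2 h3 h4.
under eq_bigr => p _ do rewrite (@invk _ _ _ _ aL Hi l (fun u v => G _ _ u v)) //.
rewrite exchange_big /= [RHS]exchange_big /=.
apply: eq_bigr => q _.
exact: (@invk _ _ _ _ aL Hi k (fun u v => G u v q.1 q.2)).
Qed.

Ltac lin aLe mLe mRe := move=> ? ? ? /=; rewrite ?(aLe, mLe, mRe) //.

Theorem mainTheorem10 (K : fieldType) (A : lmodType K)
    (mu : A -> A -> A) (alpha : A -> A) (r : seq (A * A)) :
  hom_assoc mu alpha -> alpha_inv alpha r -> AHYBE mu alpha r ->
  (forall a, Rop mu alpha r (alpha a) = alpha (Rop mu alpha r a)) /\
  (forall a b,
     mu (Rop mu alpha r (alpha (alpha a))) (Rop mu alpha r (alpha (alpha b)))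
     = Rop mu alpha r (mu (alpha (alpha a)) (Rop mu alpha r b)
                       + mu (Rop mu alpha r a) (alpha (alpha b)))).
Proof.
move=> [[mR mL] aL HM HA] Hinv Hyb.
have aLe : forall c u v, alpha (c *: u + v) = c *: alpha u + alpha v := aL.
have mLe : forall c u v w, mu (c *: u + v) w = c *: mu u w + mu v w :=
  fun c u v w => mL w c u v.
have mRe : forall c u v w, mu w (c *: u + v) = c *: mu w u + mu w v :=
  fun c u v w => mR w c u v.
have sumL : forall (s : seq (A * A)) F c,
    mu (\sum_(p <- s) F p) c = \sum_(p <- s) mu (F p) c.
  by move=> s F c; exact: (@lin_sum _ _ _ _ _ _ (mL c)).
have sumR : forall (s : seq (A * A)) F c,
    mu c (\sum_(p <- s) F p) = \sum_(p <- s) mu c (F p).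
  by move=> s F c; exact: (@lin_sum _ _ _ _ _ _ (mR c)).
have sumA : forall (s : seq (A * A)) F,
    alpha (\sum_(p <- s) F p) = \sum_(p <- s) alpha (F p).
  by move=> s F; exact: (@lin_sum _ _ _ _ _ _ aL).
have mDl : forall u v w, mu (u + v) w = mu u w + mu v w.
  by move=> u v w; rewrite -[u]scale1r mLe !scale1r.
have mDr : forall u v w, mu w (u + v) = mu w u + mu w v.
  by move=> u v w; rewrite -[u]scale1r mRe !scale1r.
split.
  move=> a; rewrite /Rop sumA.
  under [RHS]eq_bigr => p _ do rewrite !HM.
  symmetry.
  apply: (@invk _ _ _ _ aL Hinv 1 (fun u v => mu (alpha u) (mu (alpha a) v))).
  - by move=> v; lin aLe mLe mRe.
  - by move=> u; lin aLe mLe mRe.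
move=> a b.
have Hf : trilinearP (ff mu alpha a b).
  rewrite /ff; split; last split.
  - by move=> v w; lin aLe mLe mRe.
  - by move=> u w; lin aLe mLe mRe.
  - by move=> u v; lin aLe mLe mRe.
have := Hyb A _ Hf.
rewrite big_cat /= !big_allpairs_dep /= => Hy.
have EL : mu (Rop mu alpha r (alpha (alpha a))) (Rop mu alpha r (alpha (alpha b)))
  = \sum_(p <- r) \sum_(q <- r) ff mu alpha a b (alpha p.1) (mu p.2 q.1) (alpha q.2).
  rewrite /Rop sumL.
  under eq_bigr => p _ do rewrite sumR.
  rewrite -(@inv4 _ _ _ _ aL Hinv 2 2 (fun x y x' y' =>
     mu (mu (alpha x) (mu (alpha (alpha a)) y)) (mu (alpha x') (mu (alpha (alpha b)) y')))).
  - apply: eq_bigr => p _; apply: eq_bigr => q _ /=.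
    exact: pw1.
  - by move=> ? ? ?; lin aLe mLe mRe.
  - by move=> ? ? ?; lin aLe mLe mRe.
  - by move=> ? ? ?; lin aLe mLe mRe.
  - by move=> ? ? ?; lin aLe mLe mRe.
have E1 : Rop mu alpha r (mu (Rop mu alpha r a) (alpha (alpha b)))
  = \sum_(p <- r) \sum_(q <- r) ff mu alpha a b (mu p.1 q.1) (alpha q.2) (alpha p.2).
  rewrite /Rop.
  under eq_bigr => p _ do rewrite !sumL sumR.
  rewrite -(@inv4 _ _ _ _ aL Hinv 3 0 (fun x y x' y' =>
     mu (alpha x) (mu (mu (mu (alpha x') (mu a y')) (alpha (alpha b))) y))).
  - apply: eq_bigr => p _; apply: eq_bigr => q _ /=.
    exact: pw2.
  - by move=> ? ? ?; lin aLe mLe mRe.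
  - by move=> ? ? ?; lin aLe mLe mRe.
  - by move=> ? ? ?; lin aLe mLe mRe.
  - by move=> ? ? ?; lin aLe mLe mRe.
have E2 : Rop mu alpha r (mu (alpha (alpha a)) (Rop mu alpha r b))
  = \sum_(p <- r) \sum_(q <- r) ff mu alpha a b (alpha p.1) (alpha q.1) (mu q.2 p.2).
  rewrite /Rop.
  under eq_bigr => p _ do rewrite sumR sumL sumR.
  rewrite -(@inv4 _ _ _ _ aL Hinv 3 0 (fun x y x' y' =>
     mu (alpha x) (mu (mu (alpha (alpha a)) (mu (alpha x') (mu b y'))) y))).
  - apply: eq_bigr => p _; apply: eq_bigr => q _ /=.
    exact: pw3.
  - by move=> ? ? ?; lin aLe mLe mRe.
  - by move=> ? ? ?; lin aLe mLe mRe.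
  - by move=> ? ? ?; lin aLe mLe mRe.
  - by move=> ? ? ?; lin aLe mLe mRe.
have Radd : forall X Y, Rop mu alpha r (X + Y) = Rop mu alpha r X + Rop mu alpha r Y.
  move=> X Y; rewrite /Rop -big_split /=; apply: eq_bigr => p _.
  by rewrite mDl mDr.
rewrite Radd E1 E2 EL Hy addrC.
done.
Qed.
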